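(* Let $m\ge 0$, let $v$ be a derangement of order $m$, and let $n\ge m$. Then the map ${\bf\Phi}=\phi_1\circ\phi_2\circ\cdots\circ\phi_n$ defined below is a bijection of $\mathrm{Sh}(0^{n-m}v)$ onto itself, and for every $w\in\mathrm{Sh}(0^{n-m}v)$, $$\mathrm{RISE}\,w=\mathrm{RISE}^\bullet\,{\bf\Phi}(w).$$
   Context: Words have nonnegative integer letters. For a word $w=x_1\cdots x_n$: $\mathrm{RISE}\,w=\{i:1\le i\le n,\ x_i\le x_{i+1}\}$ with the convention $x_{n+1}=+\infty$ (so $n\in\mathrm{RISE}\,w$). $\mathrm{Pos}\,w$ is the subword of positive letters of $w$. For a word $v$ of positive integers of length $m\le n$, $\mathrm{Sh}(0^{n-m}v)$ is the set of words of length $n$ having exactly $n-m$ letters equal to $0$ and with $\mathrm{Pos}\,w=v$. A derangement of order $m$ is a word $y_1\cdots y_m$ that is a permutation of $1,2,\dots,m$ with $y_i\neq i$ for all $i$. Excedance: let $v$ be a derangement of order $m$ and $w=x_1\cdots x_n\in\mathrm{Sh}(0^{n-m}v)$. For each position $k$ with $x_k>0$, let $\mathrm{red}(k)$ be the number of positive letters among $x_1,\dots,x_k$. The positive letter $x_k$ is excedent if $x_k>\mathrm{red}(k)$ and subexcedent if $x_k<\mathrm{red}(k)$ (one of these always holds). A letter is non-subexcedent if it is $0$ or excedent. The fictitious letters $x_0=x_{n+1}=+\infty$ are regarded as excedent (hence non-subexcedent). $\mathrm{RISE}^\bullet w$ is the set of $i$, $1\le i\le n$, such that one of the following holds: (1)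 $0<x_i<x_{i+1}$; (2) $x_i=x_{i+1}=0$; (3) $x_i=0$ and $x_{i+1}$ is excedent; (4) $x_i$ is subexcedent and $x_{i+1}=0$. The maps $\phi_l$ ($1\le l\le n$) on $\mathrm{Sh}(0^{n-m}v)$: if $l>n-m$, $\phi_l(w)=w$. If $1\le l\le n-m$, let $j$ be the position of the $l$-th letter equal to $0$ in $w$, read from left to right. (a) If $x_{j-1}$ and $x_{j+1}$ are both non-subexcedent, $\phi_l(w)=w$. (b) If $x_{j-1}$ is non-subexcedent and $x_{j+1}$ is subexcedent, or if both are subexcedent with $x_{j-1}>x_{j+1}$: let $k$ be the greatest integer $k\ge j+1$ with $x_{j+1}<x_{j+2}<\cdots<x_k<\mathrm{red}(k)$, and set $\phi_l(w)=x_1\cdots x_{j-1}\,x_{j+1}\cdots x_k\,0\,x_{k+1}\cdots x_n$. (c) If $x_{j-1}$ is subexcedent and $x_{j+1}$ is non-subexcedent, or if both are subexcedent with $x_{j-1}<x_{j+1}$: let $i$ be the smallest integer $i\le j-1$ with $\mathrm{red}(i)>x_i>x_{i+1}>\cdots>x_{j-1}$, and set $\phi_l(w)=x_1\cdots x_{i-1}\,0\,x_i\cdots x_{j-1}\,x_{j+1}\cdots x_n$. Finally ${\bf\Phi}(w)=\phi_1(\phi_2(\cdots\phi_n(w)\cdots))$. *)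

(* Defs.v *)
(* Words are sequences of natural numbers; positions are
   1-indexed as in the paper: letter i of w is  nth 0 w i.-1  for 1 <= i <= n. *)
From mathcomp Require Import all_boot.
Set Implicit Arguments. Unset Strict Implicit. Unset Printing Implicit Defensive.

Definition word := seq nat.

Definition ltr (w : word) (i : nat) : nat := nth 0 w i.-1.

(* x_i as an extended letter: None stands for the fictitious +infinity
   (positions 0 and n+1, or any position outside 1..n). *)
Definition xlt (w : word) (i : nat) : option nat :=
  if (1 <= i <= size w) then Some (ltr w i) else None.

Definition olt (a b : option nat) : bool :=
  match a, b with
  | Some a, Some b => a < b
  | Some _, None => true
  | None, _ => false
  end.
Definition ole (a b : option nat) : bool :=
  match a, b with
  | Some a, Some b => a <= b
  | _, None => true
  | None, Some _ => false
  end.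

(* RISE w = { i : 1 <= i <= n, x_i <= x_{i+1} }, with x_{n+1} = +oo,
   represented as the increasing list of its elements. *)
Definition RISE (w : word) : seq nat :=
  [seq i <- iota 1 (size w) | ole (xlt w i) (xlt w i.+1)].

Definition Pos (w : word) : word := [seq x <- w | 0 < x].

Definition derangement (v : word) : bool :=
  perm_eq v (iota 1 (size v)) &&
  all (fun i => nth 0 v i != i.+1) (iota 0 (size v)).

Definition Sh (n : nat) (v : word) : pred word :=
  [pred w : word | [&& size w == n, count_mem 0 w == n - size v & Pos w == v]].

Definition red (w : word) (k : nat) : nat := count (fun x => 0 < x) (take k w).

(* excedent / subexcedent; fictitious positions (outside 1..n) are excedent *)
Definition exc (w : word) (k : nat) : bool :=
  if (1 <= k <= size w) then (0 < ltr w k) && (red w k < ltr w k) else true.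
Definition subexc (w : word) (k : nat) : bool :=
  (1 <= k <= size w) && (0 < ltr w k) && (ltr w k < red w k).
Definition nonsub (w : word) (k : nat) : bool :=
  if (1 <= k <= size w) then (ltr w k == 0) || exc w k else true.

Definition RISEb (w : word) : seq nat :=
  [seq i <- iota 1 (size w) |
     [|| (0 < ltr w i) && olt (xlt w i) (xlt w i.+1),
         (xlt w i == Some 0) && (xlt w i.+1 == Some 0),
         (ltr w i == 0) && exc w i.+1
       | subexc w i && (xlt w i.+1 == Some 0)]].

Definition zpos (w : word) (l : nat) : nat :=
  nth 0 [seq t <- iota 1 (size w) | ltr w t == 0] l.-1.

Definition chain_b (w : word) (j k : nat) : bool :=
  all (fun t => ltr w t < ltr w t.+1) (iota j.+1 (k - j.+1)) && (ltr w k < red w k).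
Definition chain_c (w : word) (j i : nat) : bool :=
  (ltr w i < red w i) && all (fun t => ltr w t > ltr w t.+1) (iota i (j.-1 - i)).

Definition phi (n m l : nat) (w : word) : word :=
  if (l < 1) || (n - m < l) then w else
  let j := zpos w l in
  let nl := nonsub w j.-1 in let nr := nonsub w j.+1 in
  let sl := subexc w j.-1 in let sr := subexc w j.+1 in
  if nl && nr then w
  else if (nl && sr) || [&& sl, sr & ltr w j.+1 < ltr w j.-1] then
    let k := last j.+1 [seq k <- iota j.+1 (n - j) | chain_b w j k] in
    take j.-1 w ++ drop j (take k w) ++ 0 :: drop k w
  else if (sl && nr) || [&& sl, sr & ltr w j.-1 < ltr w j.+1] then
    let i := head j.-1 [seq i <- iota 1 j.-1 | chain_c w j i] in
    take i.-1 w ++ 0 :: drop i.-1 (take j.-1 w) ++ drop j w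
  else w.

Definition Phi (n m : nat) (w : word) : word :=
  foldr (phi n m) w (iota 1 n).

(* Main.v *)
Require Import Defs.
From mathcomp Require Import all_boot zify.
Set Implicit Arguments. Unset Strict Implicit. Unset Printing Implicit Defensive.

Lemma take_ltr (u : word) k : k <= size u -> take k u = map (ltr u) (iota 1 k).
Proof.
move=> hk; rewrite -(map_nth_iota0 0 hk).
have -> : iota 1 k = map succn (iota 0 k) by rewrite -(iotaDl 1 0).
by rewrite -map_comp.
Qed.

Definition Z (u : word) k := count (fun t => ltr u t == 0) (iota 1 k).

Lemma Z_take u k : k <= size u -> Z u k = count_mem 0 (take k u).
Proof. by move=> hk; rewrite take_ltr // count_map. Qed.

Lemma ZD u a b : Z u (a + b) = Z u a + count (fun t => ltr u t == 0) (iota a.+1 b).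
Proof. by rewrite /Z iotaD count_cat add1n. Qed.

Lemma ShP n v w : w \in Sh n v -> [/\ size w = n, count_mem 0 w = n - size v & Pos w = v].
Proof. by rewrite inE => /and3P[/eqP-> /eqP-> /eqP->]. Qed.

Lemma der_uniq v : derangement v -> uniq v.
Proof. by case/andP=> /perm_uniq-> _; exact: iota_uniq. Qed.

Lemma der_ne v x : derangement v -> x \in v -> x != (index x v).+1.
Proof.
case/andP=> _ /allP H xv.
have := H (index x v); rewrite mem_iota add0n index_mem xv nth_index //.
by move=> /(_ isT).
Qed.

Lemma red_S u t : t < size u -> red u t.+1 = red u t + (0 < ltr u t.+1).
Proof. by move=> ht; rewrite /red (take_nth 0) // -cats1 count_cat /= addn0. Qed.

Lemma red_index n v u t : u \in Sh n v -> uniq v -> 0 < t <= size u ->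
  0 < ltr u t -> red u t = (index (ltr u t) v).+1.
Proof.
move=> /ShP[_ _ hP] uv /andP[]; case: t => // t _ ht hpos.
have hv := hP; rewrite /Pos -(cat_take_drop t.+1 u) filter_cat (take_nth 0) // in hv.
rewrite filter_rcons /= -/(ltr u t.+1) hpos in hv.
set P := [seq x <- take t u | 0 < x] in hv.
set R := [seq x <- drop t.+1 u | 0 < x] in hv.
have -> : red u t.+1 = (size P).+1.
  by rewrite /red (take_nth 0) // -cats1 count_cat /= addn0 -/(ltr u t.+1) hpos -size_filter addn1.
move: uv; rewrite -hv cat_rcons cat_uniq => /and3P[_ /hasPn H _].
rewrite index_cat ifF; first by rewrite /= eqxx addn0.
by apply/negbTE; apply: (H (ltr u t.+1)); rewrite inE eqxx.
Qed.

Definition sv (v : word) x := x < (index x v).+1.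
Definition Sx v (a : option nat) := if a is Some x then (0 < x) && sv v x else false.
Definition Ex v (a : option nat) := if a is Some x then (0 < x) && ~~ sv v x else true.

Lemma xltE u t : 0 < t <= size u -> xlt u t = Some (ltr u t).
Proof. by rewrite /xlt => ->. Qed.
Lemma xltN u t : (t == 0) || (size u < t) -> xlt u t = None.
Proof. rewrite /xlt; case: ifP => //; lia. Qed.

Lemma mem_pos n v u t : u \in Sh n v -> 0 < t <= size u -> 0 < ltr u t -> ltr u t \in v.
Proof.
move=> /ShP[_ _ <-] /andP[t0 ts] hp; rewrite mem_filter hp /=.
by rewrite /ltr; apply: mem_nth; case: (t) t0 ts.
Qed.

Lemma subexcE n v u t : derangement v -> u \in Sh n v -> subexc u t = Sx v (xlt u t).
Proof.
move=> hd hu; rewrite /subexc /xlt; case: ifP => //= ht.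
case: (posnP (ltr u t)) => [->//|hp] /=.
by rewrite (red_index hu (der_uniq hd)) // ht.
Qed.

Lemma excE n v u t : derangement v -> u \in Sh n v -> exc u t = Ex v (xlt u t).
Proof.
move=> hd hu; rewrite /exc /xlt; case: ifP => //= ht.
case: (posnP (ltr u t)) => [->//|hp] /=.
rewrite (red_index hu (der_uniq hd)) // ?ht // /sv.
have := der_ne hd (mem_pos hu ht hp); lia.
Qed.

Lemma nonsubE n v u t : derangement v -> u \in Sh n v -> nonsub u t = ~~ Sx v (xlt u t).
Proof.
move=> hd hu; rewrite /nonsub (excE _ hd hu) /xlt; case: ifP => //= ht.
by case: (posnP (ltr u t)) => [->//|hp] /=; rewrite ht /= hp.
Qed.

Lemma SxP v u t : Sx v (xlt u t) -> [/\ 0 < t <= size u, 0 < ltr u t & sv v (ltr u t)].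
Proof. by rewrite /xlt; case: ifP => //= ht /andP[h1 h2]. Qed.

Lemma idx_red n v u t : u \in Sh n v -> uniq v -> 0 < t <= size u ->
  0 < ltr u t -> index (ltr u t) v = (red u t).-1.
Proof. by move=> hu uv ht hp; rewrite (red_index hu uv ht hp). Qed.

Lemma ax1 (v : word) (a b : nat) : index b v = (index a v).+1 -> a < b -> ~~ sv v a -> ~~ sv v b.
Proof. rewrite /sv; lia. Qed.
Lemma ax2 (v : word) (a b : nat) : index b v = (index a v).+1 -> b < a -> sv v a -> sv v b.
Proof. rewrite /sv; lia. Qed.
Lemma axne (v : word) (a b : nat) : index b v = (index a v).+1 -> a != b.
Proof. by move=> h; apply/negP=> /eqP e; rewrite e in h; lia. Qed.


Lemma zpos_char u l j : 0 < l -> 0 < j <= size u -> ltr u j = 0 -> Z u j.-1 = l.-1 -> zpos u l = j.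
Proof.
move=> l0 hj xj hZ; rewrite /zpos.
have e : size u = j.-1 + (size u - j).+1 by lia.
rewrite e iotaD /= filter_cat.
have -> : 1 + j.-1 = j by lia.
rewrite nth_cat size_filter -/(Z u j.-1) hZ ltnn subnn /= xj eqxx.
by [].
Qed.

Lemma ltr_cons x u t : 0 < t -> ltr (x :: u) t.+1 = ltr u t.
Proof. by case: t. Qed.

Lemma Z_cons x u k : Z (x :: u) k.+1 = (x == 0) + Z u k.
Proof.
rewrite /Z /=; have -> : iota 2 k = map succn (iota 1 k) by rewrite -(iotaDl 1 1).
rewrite count_map; congr (_ + _).
apply: eq_in_count => t; rewrite mem_iota /= => /andP[t1 _].
by rewrite ltr_cons.
Qed.

Lemma zero_exists (u : word) l : 0 < l <= Z u (size u) ->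
  exists j, [/\ 0 < j <= size u, ltr u j = 0 & Z u j.-1 = l.-1].
Proof.
elim: u l => [|x u IH] l /=; first by rewrite /Z /=; lia.
rewrite Z_cons.
case: (eqVneq x 0) => [->|hx] /= hl.
- case: (eqVneq l 1) => [->|l1].
    by exists 1; split => //; rewrite /Z.
  have [|j [hj xj zj]] := IH l.-1; first lia.
  exists j.+1; split => //; first lia.
    by rewrite ltr_cons //; case/andP: hj.
  have -> : j.+1.-1 = (j.-1).+1 by lia.
  rewrite Z_cons zj eqxx; lia.
- have [|j [hj xj zj]] := IH l; first by move: hl.
  exists j.+1; split => //; first lia.
    by rewrite ltr_cons //; case/andP: hj.
  have -> : j.+1.-1 = (j.-1).+1 by lia.
  by rewrite Z_cons zj (negbTE hx).
Qed.

Lemma Z_count (u : word) : Z u (size u) = count_mem 0 u.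
Proof. by rewrite Z_take // take_size. Qed.

Lemma ShZ n v (u : word) : u \in Sh n v -> Z u (size u) = n - size v.
Proof. by move=> /ShP[_ <- _]; rewrite Z_count. Qed.

Lemma zposP n v u l : u \in Sh n v -> 0 < l <= n - size v ->
  [/\ 0 < zpos u l <= size u, ltr u (zpos u l) = 0 & Z u (zpos u l).-1 = l.-1].
Proof.
move=> hu hl; have cu := ShZ hu.
have [|j [hj xj zj]] := zero_exists (u := u) (l := l); first by rewrite cu.
by rewrite (zpos_char _ hj xj zj) //; case/andP: hl.
Qed.

Lemma Z_between u a b : Z u b = Z u a + 1 -> ltr u a.+1 = 0 -> a < b ->
  forall t, a.+1 < t <= b -> 0 < ltr u t.
Proof.
move=> hZ xa ab t ht.
have e : a.+1 + (b - a.+1) = b by lia.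
have h1 : Z u a.+1 = Z u a + 1 by rewrite -addn1 ZD /= xa.
have h2 := ZD u a.+1 (b - a.+1); rewrite e in h2.
have : count (fun t => ltr u t == 0) (iota a.+2 (b - a.+1)) = 0 by lia.
move=> hc; have : ~~ has (fun t => ltr u t == 0) (iota a.+2 (b - a.+1)) by rewrite has_count hc.
move=> /hasPn /(_ t).
rewrite mem_iota; have -> : a.+2 <= t < a.+2 + (b - a.+1) by lia.
by move/(_ isT); rewrite lt0n.
Qed.

Lemma Z_mono u a b : a <= b -> Z u a <= Z u b.
Proof. by move=> ab; rewrite -(subnKC ab) ZD leq_addr. Qed.

Lemma last_filter_max (P : pred nat) a b : 0 < b -> P a ->
  let K := last a [seq k <- iota a b | P k] in
  [/\ a <= K < a + b, P K & forall k, K < k < a + b -> ~~ P k].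
Proof.
case: b => // b _ Pa; elim: b => [|b IH].
  by rewrite /= Pa /=; split => //; lia.
rewrite -[b.+2]addn1 iotaD filter_cat last_cat.
move: IH; set L := last a _ => -[h1 h2 h3].
rewrite /= addn1.
case hP: (P (a + b.+1)) => /=.
  split => //; first lia.
  lia.
split => //; first lia.
move=> k hk; case: (ltnP k (a + b.+1)) => hk2.
  by apply: h3; lia.
have -> : k = a + b.+1 by lia.
by rewrite hP.
Qed.

Lemma head_filter_min (P : pred nat) a b d : 0 < b -> P (a + b).-1 ->
  let I := head d [seq i <- iota a b | P i] in
  [/\ a <= I < a + b, P I & forall i, a <= i < I -> ~~ P i].
Proof.
elim: b a => [//|b IH] a _ hP /=.
case Pa: (P a) => /=.
  by split => //; lia.
case: b IH hP => [|b] IH hP.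
  by rewrite addn1 /= Pa in hP.
have [||h1 h2 h3] := IH a.+1; [by [] | by rewrite addSn -addnS |].
split => //; first lia.
move=> i hi; case: (eqVneq i a) => [->|ia]; first by rewrite Pa.
by apply: h3; lia.
Qed.


Lemma idx_adj n v (u : word) t : u \in Sh n v -> uniq v -> 0 < t < size u ->
  0 < ltr u t -> 0 < ltr u t.+1 -> index (ltr u t.+1) v = (index (ltr u t) v).+1.
Proof.
move=> hu uv ht h1 h2.
rewrite (idx_red hu uv _ h1) ?(idx_red hu uv _ h2); try lia.
have := red_index hu uv (_ : 0 < t <= size u) h1.
rewrite red_S; last lia. rewrite h2; lia.
Qed.

Lemma idx_gap n v (u : word) j : u \in Sh n v -> uniq v -> 1 < j < size u ->
  ltr u j = 0 -> 0 < ltr u j.-1 -> 0 < ltr u j.+1 ->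
  index (ltr u j.+1) v = (index (ltr u j.-1) v).+1.
Proof.
move=> hu uv hj xj h1 h2.
rewrite (idx_red hu uv _ h1) ?(idx_red hu uv _ h2); try lia.
have := red_index hu uv (_ : 0 < j.-1 <= size u) h1.
rewrite red_S; last lia. rewrite h2.
have -> : j = j.-1.+1 by lia.
rewrite red_S; last lia. rewrite -(_ : j = j.-1.+1) ?xj; lia.
Qed.

Definition Kof (u : word) (j n : nat) := last j.+1 [seq k <- iota j.+1 (n - j) | chain_b u j k].
Definition Iof (u : word) (j : nat) := head j.-1 [seq i <- iota 1 j.-1 | chain_c u j i].
Definition moveR (u : word) j K := take j.-1 u ++ drop j (take K u) ++ 0 :: drop K u.
Definition moveL (u : word) j I := take I.-1 u ++ 0 :: drop I.-1 (take j.-1 u) ++ drop j u.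

Lemma phi_spec n v (u : word) l : derangement v -> u \in Sh n v -> 0 < l <= n - size v ->
  let j := zpos u l in
  [\/ [/\ ~~ Sx v (xlt u j.-1), ~~ Sx v (xlt u j.+1) & phi n (size v) l u = u],
      [/\ Sx v (xlt u j.+1), ~~ Sx v (xlt u j.-1) || (ltr u j.+1 < ltr u j.-1)
        & phi n (size v) l u = moveR u j (Kof u j n)]
    | [/\ Sx v (xlt u j.-1), ~~ Sx v (xlt u j.+1) || (ltr u j.-1 < ltr u j.+1)
        & phi n (size v) l u = moveL u j (Iof u j)]].
Proof.
move=> hd hu hl j.
have [hj xj Zj] := zposP hu hl; rewrite -/j in hj xj Zj.
rewrite /phi ifF; last by lia.
rewrite -/j !(nonsubE _ hd hu) !(subexcE _ hd hu).
case sl: (Sx v (xlt u j.-1)); case sr: (Sx v (xlt u j.+1)) => /=.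
- case: (ltnP (ltr u j.+1) (ltr u j.-1)) => h1.
    by apply: Or32.
  case: (ltnP (ltr u j.-1) (ltr u j.+1)) => h2.
    by apply: Or33.
  have [hj1 p1 _] := SxP sl; have [hj2 p2 _] := SxP sr.
  have := idx_gap hu (der_uniq hd) (_ : 1 < j < size u) xj p1 p2.
  move=> /(_ _)/axne; rewrite eqn_leq h1 h2 => /(_ _)/negP; case; lia.
- by apply: Or33.
- by apply: Or32.
- by apply: Or31.
Qed.


Lemma KP n v (u : word) j : derangement v -> u \in Sh n v -> 0 < j -> ltr u j = 0 ->
  Sx v (xlt u j.+1) ->
  let K := Kof u j n in
  [/\ j < K <= n, (forall t, j < t <= K -> 0 < ltr u t /\ sv v (ltr u t)),
     (forall t, j < t < K -> ltr u t < ltr u t.+1)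
   & (K < n -> ltr u K < ltr u K.+1 -> ~~ sv v (ltr u K.+1))].
Proof.
move=> hd hu j0 xj hS K.
have [su _ _] := ShP hu; have uv := der_uniq hd.
have [hj1 p1 s1] := SxP hS.
have [||hK PK hmax] := @last_filter_max (chain_b u j) j.+1 (n - j).
- lia.
- rewrite /chain_b subnn /= (red_index hu uv hj1 p1); exact: s1.
rewrite -/(Kof u j n) -/K in hK PK hmax.
move: PK; rewrite /chain_b => /andP[/allP inc0 svK0].
have inc : forall t, j < t < K -> ltr u t < ltr u t.+1.
  by move=> t ht; apply: inc0; rewrite mem_iota; lia.
have posd : forall d, j.+1 + d <= K -> 0 < ltr u (j.+1 + d).
  elim=> [|d IH] hd'; first by rewrite addn0.
  have := inc (j.+1 + d) (_ : _); rewrite addnS; move=> /(_ _) h.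
  have h' := h (_ : _); have := IH (_ : _); lia.
have pos : forall t, j < t <= K -> 0 < ltr u t.
  by move=> t ht; have := posd (t - j.+1) (_ : _); rewrite subnKC; lia.
have svK : sv v (ltr u K).
  by move: svK0; rewrite (red_index hu uv _ (pos K _)) //; lia.
have svall : forall t, j < t <= K -> sv v (ltr u t).
  move=> t ht; apply/negPn/negP => nt.
  have : forall d, t + d <= K -> ~~ sv v (ltr u (t + d)).
    elim=> [|d IH] hd'; first by rewrite addn0.
    rewrite addnS; apply: (ax1 (a := ltr u (t + d))).
    + apply: (idx_adj hu uv); try lia; apply: pos; lia.
    + apply: inc; lia.
    + by apply: IH; lia.
  by move=> /(_ (K - t)); rewrite subnKC ?svK //; lia.
split => //; first lia.
  by move=> t ht; split; [apply: pos | apply: svall].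
move=> Kn hlt.
have pK1 : 0 < ltr u K.+1 by have := pos K (_ : _); lia.
have hK1 : K < K.+1 < j.+1 + (n - j) by lia.
have := hmax K.+1 hK1.
rewrite /chain_b negb_and => /orP[/negP []|].
  apply/allP => t; rewrite mem_iota => ht.
  case: (ltnP t K) => htK; first by apply: inc; lia.
  by have -> : t = K by lia.
by rewrite (red_index hu uv _ pK1) //; lia.
Qed.

Lemma IP n v (u : word) j : derangement v -> u \in Sh n v -> ltr u j = 0 ->
  Sx v (xlt u j.-1) ->
  let I := Iof u j in
  [/\ 0 < I <= j.-1, (forall t, I <= t <= j.-1 -> 0 < ltr u t /\ sv v (ltr u t)),
    (forall t, I <= t < j.-1 -> ltr u t.+1 < ltr u t)
  & (1 < I -> 0 < ltr u I.-1 -> sv v (ltr u I.-1) -> ltr u I.-1 < ltr u I)].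
Proof.
move=> hd hu xj hS I.
have [su _ _] := ShP hu; have uv := der_uniq hd.
have [hj1 p1 s1] := SxP hS.
have [||hI PI hmin] := @head_filter_min (chain_c u j) 1 j.-1 j.-1.
- lia.
- rewrite add1n /= /chain_c subnn /= andbT (red_index hu uv hj1 p1); exact: s1.
rewrite -/(Iof u j) -/I in hI PI hmin.
move: PI; rewrite /chain_c => /andP[svI0 /allP dec0].
have dec : forall t, I <= t < j.-1 -> ltr u t.+1 < ltr u t.
  by move=> t ht; apply: dec0; rewrite mem_iota; lia.
have posd : forall d, I <= j.-1 - d -> 0 < ltr u (j.-1 - d).
  elim=> [|d IH] hd'; first by rewrite subn0.
  have e : (j.-1 - d.+1).+1 = j.-1 - d by lia.
  have := dec (j.-1 - d.+1) (_ : _); rewrite e => /(_ _) h.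
  have h' := h (_ : _); have := IH (_ : _); lia.
have pos : forall t, I <= t <= j.-1 -> 0 < ltr u t.
  by move=> t ht; have := posd (j.-1 - t) (_ : _); rewrite subKn; lia.
have svI : sv v (ltr u I).
  by move: svI0; rewrite (red_index hu uv _ (pos I _)) //; lia.
have svall : forall t, I <= t <= j.-1 -> sv v (ltr u t).
  move=> t ht.
  have : forall d, I + d <= j.-1 -> sv v (ltr u (I + d)).
    elim=> [|d IH] hd'; first by rewrite addn0.
    rewrite addnS; apply: (ax2 (a := ltr u (I + d))).
    + apply: (idx_adj hu uv); try lia; apply: pos; lia.
    + apply: dec; lia.
    + by apply: IH; lia.
  by move=> /(_ (t - I)); rewrite subnKC; lia.
split => //.
  by move=> t ht; split; [apply: pos | apply: svall].
move=> I1 pI1 svI1.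
have hI1 : 1 <= I.-1 < I by lia.
have := hmin I.-1 hI1.
rewrite /chain_c negb_and (red_index hu uv _ pI1); last lia.
rewrite -/(sv v (ltr u I.-1)) svI1 /=.
have -> : j.-1 - I.-1 = (j.-1 - I).+1 by lia.
have -> : iota I.-1 (j.-1 - I).+1 = I.-1 :: iota I (j.-1 - I) by rewrite /= prednK //; lia.
rewrite /= prednK; last lia.
rewrite negb_and => /orP[h|/negP []].
  have pI : 0 < ltr u I by apply: pos; lia.
  have hI2 : 0 < I.-1 < size u by lia.
  have := idx_adj hu uv hI2 pI1; rewrite prednK; last lia.
  move=> /(_ pI) hne.
  by have := axne hne; lia.
by apply/allP => t; rewrite mem_iota => ht; apply: dec; lia.
Qed.


Lemma size_moveR (u : word) j K : 0 < j <= K -> K <= size u -> size (moveR u j K) = size u.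
Proof.
move=> hj hK; rewrite /moveR !size_cat /= !size_drop !size_takel; lia.
Qed.

Lemma size_moveL (u : word) j I : 0 < I <= j.-1 -> j <= size u -> size (moveL u j I) = size u.
Proof.
move=> hI hj; rewrite /moveL size_cat /= size_cat !size_drop !size_takel; lia.
Qed.

Lemma ltr_moveR (u : word) j K t : 0 < j <= K -> K <= size u -> 0 < t ->
  ltr (moveR u j K) t =
  if t < j then ltr u t else if t < K then ltr u t.+1 else if t == K then 0 else ltr u t.
Proof.
move=> hj hK ht; rewrite /moveR /ltr nth_cat size_takel; last lia.
case: ifP => h1.
  by rewrite nth_take // ifT //; lia.
rewrite ifF; last lia.
rewrite nth_cat size_drop size_takel //.
case: ifP => h2.
  rewrite nth_drop nth_take; last lia.
  by rewrite ifT; [congr nth; lia | lia].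
rewrite ifF; last lia.
case: (eqVneq t K) => [->|tK].
  by have -> : K.-1 - j.-1 - (K - j) = 0 by lia.
have -> : t.-1 - j.-1 - (K - j) = (t.-1 - K).+1 by lia.
by rewrite /= nth_drop; congr nth; lia.
Qed.

Lemma ltr_moveL (u : word) j I t : 0 < I <= j.-1 -> j <= size u -> 0 < t ->
  ltr (moveL u j I) t =
  if t < I then ltr u t else if t == I then 0 else if t <= j then ltr u t.-1 else ltr u t.
Proof.
move=> hI hj ht; rewrite /moveL /ltr nth_cat size_takel; last lia.
case: ifP => h1.
  by rewrite nth_take // ifT //; lia.
rewrite ifF; last lia.
case: (eqVneq t I) => [->|tI].
  by rewrite subnn.
have -> : t.-1 - I.-1 = (t.-1 - I).+1 by lia.
rewrite /= nth_cat size_drop size_takel; last lia.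
case: ifP => h2.
  rewrite nth_drop nth_take; last lia.
  by rewrite ifT; [congr nth; lia | lia].
rewrite ifF; last lia.
by rewrite nth_drop; congr nth; lia.
Qed.

Lemma Sh_moveP n v (a b c : word) :
  (a ++ 0 :: b ++ c \in Sh n v) = (a ++ b ++ 0 :: c \in Sh n v).
Proof.
rewrite !inE /Pos !size_cat !count_cat !filter_cat /= !size_cat /= !count_cat /=.
by rewrite filter_cat !add1n !addnS.
Qed.

Lemma decomp0 (u : word) j : 0 < j <= size u -> ltr u j = 0 ->
  u = take j.-1 u ++ 0 :: drop j u.
Proof.
move=> hj xj; have e : nth 0 u j.-1 = 0 by [].
have hj1 : j.-1 < size u by lia.
by rewrite -{1}(cat_take_drop j.-1 u) (drop_nth 0 hj1) e prednK //; lia.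
Qed.

Lemma Sh_moveR n v (u : word) j K : 0 < j <= K -> K <= size u -> ltr u j = 0 ->
  u \in Sh n v -> moveR u j K \in Sh n v.
Proof.
move=> hj hK xj; rewrite {1}(decomp0 (_ : 0 < j <= size u) xj); last lia.
have -> : drop j u = drop j (take K u) ++ drop K u.
  rewrite -{1}(cat_take_drop K u) drop_cat size_takel //.
  case: ifP => // h; have ejK : j = K by lia.
  rewrite ejK subnn drop0.
  have -> : drop K (take K u) = [::] by apply: drop_oversize; rewrite size_takel.
  by [].
move=> h; rewrite /moveR -Sh_moveP //.
Qed.

Lemma Sh_moveL n v (u : word) j I : 0 < I <= j.-1 -> j <= size u -> ltr u j = 0 ->
  u \in Sh n v -> moveL u j I \in Sh n v.
Proof.
move=> hI hj xj; rewrite {1}(decomp0 (_ : 0 < j <= size u) xj); last lia.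
rewrite -{1}(cat_take_drop I.-1 (take j.-1 u)) take_takel; last lia.
by rewrite -catA Sh_moveP.
Qed.

Lemma Z_ext (u u' : word) k : (forall t, 0 < t <= k -> ltr u t = ltr u' t) -> Z u k = Z u' k.
Proof. by move=> h; apply: eq_in_count => t; rewrite mem_iota => ht; rewrite /= h //; lia. Qed.

Lemma Z_nozero (u : word) a b : (forall t, a < t <= a + b -> 0 < ltr u t) -> Z u (a + b) = Z u a.
Proof.
move=> h; rewrite ZD; have -> : count (fun t => ltr u t == 0) (iota a.+1 b) = 0; last by rewrite addn0.
rewrite (eq_in_count (a2 := pred0)) ?count_pred0 // => t; rewrite mem_iota => ht.
by rewrite /= eqn0Ngt h //; lia.
Qed.

Lemma zpos_moveR (u : word) j K l : 0 < l -> 0 < j < K -> K <= size u -> Z u j.-1 = l.-1 ->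
  (forall t, j < t <= K -> 0 < ltr u t) -> zpos (moveR u j K) l = K.
Proof.
move=> l0 hj hK hZ hpos; apply: zpos_char => //.
- rewrite size_moveR; lia.
- by rewrite ltr_moveR ?eqxx; try lia; rewrite ifF ?ifF; lia.
have -> : K.-1 = j.-1 + (K - j) by lia.
rewrite Z_nozero.
  rewrite -hZ; apply: Z_ext => t ht; rewrite ltr_moveR ?ifT; lia.
move=> t ht; rewrite ltr_moveR; try lia.
rewrite ifF; last lia. rewrite ifT; last lia.
by apply: hpos; lia.
Qed.

Lemma zpos_moveL (u : word) j I l : 0 < l -> 0 < I <= j.-1 -> j <= size u -> Z u j.-1 = l.-1 ->
  (forall t, I <= t <= j.-1 -> 0 < ltr u t) -> zpos (moveL u j I) l = I.
Proof.
move=> l0 hI hj hZ hpos; apply: zpos_char => //.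
- rewrite size_moveL; lia.
- by rewrite ltr_moveL ?eqxx; try lia; rewrite ifF; lia.
have e : j.-1 = I.-1 + (j.-1 - I.-1) by lia.
rewrite -hZ e Z_nozero.
  by apply: Z_ext => t ht; rewrite ltr_moveL ?ifT; lia.
by move=> t ht; apply: hpos; lia.
Qed.


Lemma SxE v (u : word) t : 0 < t <= size u -> Sx v (xlt u t) = (0 < ltr u t) && sv v (ltr u t).
Proof. by move=> ht; rewrite xltE. Qed.

Definition Rdata v (u : word) j K :=
  [/\ j < K <= size u, (forall t, j < t <= K -> 0 < ltr u t /\ sv v (ltr u t)),
      (forall t, j < t < K -> ltr u t < ltr u t.+1),
      (K < size u -> ltr u K < ltr u K.+1 -> ~~ sv v (ltr u K.+1))
    & ~~ Sx v (xlt u j.-1) || (ltr u j.+1 < ltr u j.-1)].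

Definition Ldata v (u : word) j I :=
  [/\ 0 < I <= j.-1, (forall t, I <= t <= j.-1 -> 0 < ltr u t /\ sv v (ltr u t)),
      (forall t, I <= t < j.-1 -> ltr u t.+1 < ltr u t),
      (1 < I -> 0 < ltr u I.-1 -> sv v (ltr u I.-1) -> ltr u I.-1 < ltr u I)
    & ~~ Sx v (xlt u j.+1) || (ltr u j.-1 < ltr u j.+1)].

Lemma phi_cases n v (u : word) l : derangement v -> u \in Sh n v -> 0 < l <= n - size v ->
  let j := zpos u l in let u' := phi n (size v) l u in
  [/\ 0 < j <= n, ltr u j = 0, Z u j.-1 = l.-1 &
  [\/ [/\ u' = u, ~~ Sx v (xlt u j.-1) & ~~ Sx v (xlt u j.+1)],
      exists2 K, u' = moveR u j K & Rdata v u j K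
    | exists2 I, u' = moveL u j I & Ldata v u j I]].
Proof.
move=> hd hu hl j u'.
have [su _ _] := ShP hu.
have [hj xj Zj] := zposP hu hl; rewrite -/j in hj xj Zj.
split => //; first by rewrite -su.
case: (phi_spec hd hu hl) => -[h1 h2 h3].
- by apply: Or31.
- apply: Or32; exists (Kof u j n) => //.
  have [|hK pos inc mx] := KP hd hu _ xj h1; first lia.
  by split => //; rewrite su.
- apply: Or33; exists (Iof u j) => //.
  have [hI pos dec mn] := IP hd hu xj h1.
  by split.
Qed.

Lemma phi_out n m l (u : word) : (l < 1) || (n - m < l) -> phi n m l u = u.
Proof. by rewrite /phi => ->. Qed.

Lemma phi_Sh n v (u : word) l : derangement v -> u \in Sh n v -> phi n (size v) l u \in Sh n v.
Proof.
move=> hd hu.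
case: (boolP ((l < 1) || (n - size v < l))) => hl; first by rewrite phi_out.
have hl' : 0 < l <= n - size v by lia.
have [su _ _] := ShP hu.
have [hj xj Zj [[-> _ _]|[K -> [hK _ _ _ _]]|[I -> [hI _ _ _ _]]]] := phi_cases hd hu hl'.
- by [].
- apply: Sh_moveR => //; lia.
- apply: Sh_moveL => //; lia.
Qed.

Lemma phi_size n v (u : word) l : derangement v -> u \in Sh n v -> size (phi n (size v) l u) = n.
Proof. by move=> hd hu; have [] := ShP (phi_Sh l hd hu). Qed.

Lemma ltr_eq (u1 u2 : word) : size u1 = size u2 ->
  (forall t, 0 < t <= size u1 -> ltr u1 t = ltr u2 t) -> u1 = u2.
Proof.
move=> hs h; apply: (eq_from_nth (x0 := 0) hs) => i hi.
by have := h i.+1 (_ : _); apply; lia.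
Qed.


Ltac bl := first [ lia | (apply/negbTE/eqP; lia) | (apply/eqP; lia) ].

Lemma fix_right v (u' u2 : word) j2 K : 0 < j2 -> Rdata v u2 j2 K ->
  u' = moveR u2 j2 K -> Sx v (xlt u' K.-1).
Proof.
move=> j0 [hK pos _ _ _] ->.
rewrite SxE ?size_moveR; try bl.
rewrite ltr_moveR; try bl.
rewrite ifF; last bl. rewrite ifT; last bl.
have hKK : j2 < K <= K by bl.
have [p s] := pos K hKK.
by rewrite prednK ?p ?s //; bl.
Qed.

Lemma fix_left v (u' u2 : word) j2 I : j2 <= size u2 -> Ldata v u2 j2 I ->
  u' = moveL u2 j2 I -> Sx v (xlt u' I.+1).
Proof.
move=> hj [hI pos _ _ _] ->.
rewrite SxE ?size_moveL; try bl.
rewrite ltr_moveL; try bl.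
rewrite ifF; last bl. rewrite ifF; last bl. rewrite ifT; last bl.
have hII : I <= I <= j2.-1 by bl.
by have [p s] := pos I hII; rewrite /= p s.
Qed.

Lemma right_left v (u' u1 u2 : word) j1 j2 K : 0 < j1 -> Rdata v u1 j1 K ->
  u' = moveR u1 j1 K -> j2 <= size u2 -> Ldata v u2 j2 K -> u' = moveL u2 j2 K -> False.
Proof.
move=> j0 [hK pos1 inc1 mx1 _] e1 hj2 [hI pos2 dec2 mn2 _] e2.
have s1' : size u' = size u1 by rewrite e1 size_moveR //; bl.
have s2' : size u' = size u2 by rewrite e2 size_moveL //; bl.
have a1 : ltr u' K.-1 = ltr u1 K.
  rewrite e1 ltr_moveR; try bl.
  rewrite ifF; last bl. rewrite ifT; last bl. by rewrite prednK //; bl.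
have a2 : ltr u' K.-1 = ltr u2 K.-1.
  rewrite e2 ltr_moveL; try bl. by rewrite ifT //; bl.
have b1 : ltr u' K.+1 = ltr u1 K.+1.
  rewrite e1 ltr_moveR; try bl.
  rewrite ifF; last bl. rewrite ifF; last bl. by rewrite ifF //; bl.
have b2 : ltr u' K.+1 = ltr u2 K.
  rewrite e2 ltr_moveL; try bl.
  rewrite ifF; last bl. rewrite ifF; last bl. by rewrite ifT //; bl.
have hKK : j1 < K <= K by bl.
have [p1 s1] := pos1 K hKK.
have hKK2 : K <= K <= j2.-1 by bl.
have [p2 s2] := pos2 K hKK2.
have K1 : 1 < K by bl.
have h := mn2 K1; rewrite -a2 a1 in h.
have lt1 := h p1 s1.
have Ks : K < size u1 by bl.
have := mx1 Ks; rewrite -b1 b2 => /(_ lt1).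
by rewrite s2.
Qed.

Lemma right_right v (u' u1 u2 : word) j1 j2 K : 0 < j1 < j2 -> Rdata v u1 j1 K ->
  Rdata v u2 j2 K -> u' = moveR u1 j1 K -> u' = moveR u2 j2 K -> False.
Proof.
move=> hj [hK1 pos1 inc1 _ _] [hK2 _ _ _ c2] e1 e2.
have a1 : ltr u' j2.-1 = ltr u1 j2.
  rewrite e1 ltr_moveR; try bl.
  rewrite ifF; last bl. rewrite ifT; last bl. by rewrite prednK //; bl.
have a2 : ltr u' j2.-1 = ltr u2 j2.-1.
  rewrite e2 ltr_moveR; try bl. by rewrite ifT //; bl.
have b1 : ltr u' j2 = ltr u1 j2.+1.
  rewrite e1 ltr_moveR; try bl.
  rewrite ifF; last bl. by rewrite ifT //; bl.
have b2 : ltr u' j2 = ltr u2 j2.+1.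
  rewrite e2 ltr_moveR; try bl.
  rewrite ifF; last bl. by rewrite ifT //; bl.
move: c2; rewrite SxE; last bl.
rewrite -a2 a1 -b2 b1.
have hh : j1 < j2 <= K by bl.
have [p s] := pos1 j2 hh.
have hh2 : j1 < j2 < K by bl.
have := inc1 j2 hh2.
rewrite p s /=; bl.
Qed.

Lemma left_left v (u' u1 u2 : word) j1 j2 I : j1 < j2 -> j2 <= size u2 -> size u1 = size u2 ->
  Ldata v u1 j1 I -> Ldata v u2 j2 I -> u' = moveL u1 j1 I -> u' = moveL u2 j2 I -> False.
Proof.
move=> hj hj2 s1 [hI1 _ _ _ c1] [hI2 pos2 dec2 _ _] e1 e2.
have a1 : ltr u' j1.+1 = ltr u1 j1.+1.
  rewrite e1 ltr_moveL; try bl.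
  rewrite ifF; last bl. rewrite ifF; last bl. by rewrite ifF //; bl.
have a2 : ltr u' j1.+1 = ltr u2 j1.
  rewrite e2 ltr_moveL; try bl.
  rewrite ifF; last bl. rewrite ifF; last bl. by rewrite ifT //; bl.
have b1 : ltr u' j1 = ltr u1 j1.-1.
  rewrite e1 ltr_moveL; try bl.
  rewrite ifF; last bl. rewrite ifF; last bl. by rewrite ifT //; bl.
have b2 : ltr u' j1 = ltr u2 j1.-1.
  rewrite e2 ltr_moveL; try bl.
  rewrite ifF; last bl. rewrite ifF; last bl. by rewrite ifT //; bl.
move: c1; rewrite SxE; last bl.
rewrite -a1 a2 -b1 b2.
have hh : I <= j1 <= j2.-1 by bl.
have [p s] := pos2 j1 hh.
have hh2 : I <= j1.-1 < j2.-1 by bl.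
have := dec2 j1.-1 hh2.
rewrite prednK; last bl.
rewrite p s /=; bl.
Qed.

Lemma right_eq (u' u1 u2 : word) j K : 0 < j < K -> K <= size u1 -> K <= size u2 ->
  ltr u1 j = 0 -> ltr u2 j = 0 -> u' = moveR u1 j K -> u' = moveR u2 j K -> u1 = u2.
Proof.
move=> hj hK1 hK2 x1 x2 e1 e2.
have s1 : size u' = size u1 by rewrite e1 size_moveR //; bl.
have s2 : size u' = size u2 by rewrite e2 size_moveR //; bl.
apply: ltr_eq; first bl.
move=> t ht.
case: (ltnP t j) => h1.
  have := congr1 (ltr^~ t) e1; rewrite e2 !ltr_moveR; try bl.
  by rewrite !ifT.
case: (eqVneq t j) => [->|tj]; first by rewrite x1 x2.
case: (leqP t K) => h2.
  have := congr1 (ltr^~ t.-1) e1; rewrite e2 !ltr_moveR; try bl.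
  have c1 : (t.-1 < j) = false by bl.
  have c2 : (t.-1 < K) = true by bl.
  by rewrite c1 c2 prednK; [move=> -> | bl].
have := congr1 (ltr^~ t) e1; rewrite e2 !ltr_moveR; try bl.
have c1 : (t < j) = false by bl.
have c2 : (t < K) = false by bl.
have c3 : (t == K) = false by bl.
by rewrite c1 c2 c3 => ->.
Qed.

Lemma left_eq (u' u1 u2 : word) j I : 0 < I <= j.-1 -> j <= size u1 -> j <= size u2 ->
  ltr u1 j = 0 -> ltr u2 j = 0 -> u' = moveL u1 j I -> u' = moveL u2 j I -> u1 = u2.
Proof.
move=> hI hj1 hj2 x1 x2 e1 e2.
have s1 : size u' = size u1 by rewrite e1 size_moveL //; bl.
have s2 : size u' = size u2 by rewrite e2 size_moveL //; bl.
apply: ltr_eq; first bl.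
move=> t ht.
case: (ltnP t I) => h1.
  have := congr1 (ltr^~ t) e1; rewrite e2 !ltr_moveL; try bl.
  by rewrite !ifT.
case: (eqVneq t j) => [->|tj]; first by rewrite x1 x2.
case: (ltnP t j) => h2.
  have := congr1 (ltr^~ t.+1) e1; rewrite e2 !ltr_moveL; try bl.
  have c1 : (t.+1 < I) = false by bl.
  have c2 : (t.+1 == I) = false by bl.
  have c3 : (t.+1 <= j) = true by bl.
  by rewrite c1 c2 c3 /= => ->.
have := congr1 (ltr^~ t) e1; rewrite e2 !ltr_moveL; try bl.
have c1 : (t < I) = false by bl.
have c2 : (t == I) = false by bl.
have c3 : (t <= j) = false by bl.
by rewrite c1 c2 c3 => ->.
Qed.


Lemma tgtR v (u : word) j K l : 0 < l -> 0 < j -> Z u j.-1 = l.-1 -> Rdata v u j K ->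
  zpos (moveR u j K) l = K.
Proof.
move=> l0 j0 hZ [hK pos _ _ _]; apply: zpos_moveR => //; try lia.
by move=> t ht; case: (pos t ht).
Qed.

Lemma tgtL v (u : word) j I l : 0 < l -> j <= size u -> Z u j.-1 = l.-1 -> Ldata v u j I ->
  zpos (moveL u j I) l = I.
Proof.
move=> l0 hj hZ [hI pos _ _ _]; apply: zpos_moveL => //.
by move=> t ht; case: (pos t ht).
Qed.

Lemma phi_inj n v l (u1 u2 : word) : derangement v -> u1 \in Sh n v -> u2 \in Sh n v ->
  phi n (size v) l u1 = phi n (size v) l u2 -> u1 = u2.
Proof.
move=> hd h1 h2 e.
case: (boolP ((l < 1) || (n - size v < l))) => hl; first by rewrite !phi_out in e.
have hl' : 0 < l <= n - size v by lia.
have [s1 _ _] := ShP h1; have [s2 _ _] := ShP h2.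
have [hj1 xj1 Z1 c1] := phi_cases hd h1 hl'.
have [hj2 xj2 Z2 c2] := phi_cases hd h2 hl'.
move: c1 c2; rewrite -e; set u' := phi n (size v) l u1.
set j1 := zpos u1 l in hj1 xj1 Z1 *; set j2 := zpos u2 l in hj2 xj2 Z2 *.
have l0 : 0 < l by lia.
case=> [[eu1 nl1 nr1]|[K1 eu1 R1]|[I1 eu1 L1]];
  case=> [[eu2 nl2 nr2]|[K2 eu2 R2]|[I2 eu2 L2]].
- by rewrite -eu1 -eu2.
- have t1 : zpos u' l = j1 by rewrite eu1.
  have t2 : zpos u' l = K2 by rewrite eu2 (tgtR _ _ Z2 R2) //; lia.
  have hh : 0 < j2 by lia.
  have := fix_right hh R2 eu2.
  by rewrite -t2 t1 eu1 (negbTE nl1).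
- have t1 : zpos u' l = j1 by rewrite eu1.
  have t2 : zpos u' l = I2 by rewrite eu2 (tgtL _ _ Z2 L2) //; lia.
  have hh : j2 <= size u2 by lia.
  have := fix_left hh L2 eu2.
  by rewrite -t2 t1 eu1 (negbTE nr1).
- have t2 : zpos u' l = j2 by rewrite eu2.
  have t1 : zpos u' l = K1 by rewrite eu1 (tgtR _ _ Z1 R1) //; lia.
  have hh : 0 < j1 by lia.
  have := fix_right hh R1 eu1.
  by rewrite -t1 t2 eu2 (negbTE nl2).
- have t1 : zpos u' l = K1 by rewrite eu1 (tgtR _ _ Z1 R1) //; lia.
  have t2 : zpos u' l = K2 by rewrite eu2 (tgtR _ _ Z2 R2) //; lia.
  have eK : K2 = K1 by rewrite -t1 -t2.
  rewrite eK in R2 eu2.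
  have [hK1 _ _ _ _] := R1; have [hK2 _ _ _ _] := R2.
  case: (ltngtP j1 j2) => hj.
  + have hh : 0 < j1 < j2 by lia.
    by case: (right_right hh R1 R2 eu1 eu2).
  + have hh : 0 < j2 < j1 by lia.
    by case: (right_right hh R2 R1 eu2 eu1).
  + rewrite -hj in eu2 xj2.
    have hh : 0 < j1 < K1 by lia.
    by apply: (right_eq hh _ _ xj1 xj2 eu1 eu2); lia.
- have t1 : zpos u' l = K1 by rewrite eu1 (tgtR _ _ Z1 R1) //; lia.
  have t2 : zpos u' l = I2 by rewrite eu2 (tgtL _ _ Z2 L2) //; lia.
  have eK : I2 = K1 by rewrite -t1 -t2.
  rewrite eK in L2 eu2.
  have hh : 0 < j1 by lia. have hh' : j2 <= size u2 by lia.
  by case: (right_left hh R1 eu1 hh' L2 eu2).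
- have t1 : zpos u' l = I1 by rewrite eu1 (tgtL _ _ Z1 L1) //; lia.
  have t2 : zpos u' l = j2 by rewrite eu2.
  have hh : j1 <= size u1 by lia.
  have := fix_left hh L1 eu1.
  by rewrite -t1 t2 eu2 (negbTE nr2).
- have t1 : zpos u' l = I1 by rewrite eu1 (tgtL _ _ Z1 L1) //; lia.
  have t2 : zpos u' l = K2 by rewrite eu2 (tgtR _ _ Z2 R2) //; lia.
  have eK : I1 = K2 by rewrite -t1 -t2.
  rewrite eK in L1 eu1.
  have hh : 0 < j2 by lia. have hh' : j1 <= size u1 by lia.
  by case: (right_left hh R2 eu2 hh' L1 eu1).
- have t1 : zpos u' l = I1 by rewrite eu1 (tgtL _ _ Z1 L1) //; lia.
  have t2 : zpos u' l = I2 by rewrite eu2 (tgtL _ _ Z2 L2) //; lia.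
  have eI : I2 = I1 by rewrite -t1 -t2.
  rewrite eI in L2 eu2.
  have [hI1 _ _ _ _] := L1.
  case: (ltngtP j1 j2) => hj.
  + have hh : j2 <= size u2 by lia. have hh' : size u1 = size u2 by lia.
    by case: (left_left hj hh hh' L1 L2 eu1 eu2).
  + have hh : j1 <= size u1 by lia. have hh' : size u2 = size u1 by lia.
    by case: (left_left hj hh hh' L2 L1 eu2 eu1).
  + rewrite -hj in eu2 xj2.
    have hh : 0 < I1 <= j1.-1 by lia.
    by apply: (left_eq hh _ _ xj1 xj2 eu1 eu2); lia.
Qed.


Ltac simp_if := repeat match goal with |- context [if ?c then _ else _] =>
  first [ (have -> : c = true by bl) | (have -> : c = false by bl) ] end.

Definition rr (a b : option nat) := ole a b.
Definition rb v (a b : option nat) :=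
  [|| (if a is Some x then 0 < x else false) && olt a b, (a == Some 0) && (b == Some 0),
      (a == Some 0) && Ex v b | Sx v a && (b == Some 0)].
Definition mp v (u : word) t i :=
  if i < t then rr (xlt u i) (xlt u i.+1) else rb v (xlt u i) (xlt u i.+1).
Definition MR v (u : word) t := [seq i <- iota 1 (size u) | mp v u t i].

Definition rbs v (a b : nat) :=
  [|| (0 < a) && (a < b), (a == 0) && (b == 0), (a == 0) && ((0 < b) && ~~ sv v b)
    | (0 < a) && sv v a && (b == 0)].

Lemma mpE v (u : word) t i : 0 < i < size u ->
  mp v u t i = if i < t then ltr u i <= ltr u i.+1 else rbs v (ltr u i) (ltr u i.+1).
Proof. by move=> hi; rewrite /mp !xltE //; lia. Qed.

Lemma mp_last v (u : word) t : 0 < size u -> mp v u t (size u) = true.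
Proof.
move=> h; rewrite /mp xltE; last lia. rewrite xltN; last by rewrite ltnSn orbT.
by case: ifP => _ //; rewrite /rb /=; case: (ltr u (size u)).
Qed.

Lemma rbs_pp v a b : 0 < a -> 0 < b -> rbs v a b = (a < b).
Proof.
move=> ha hb; rewrite /rbs ha /=.
have -> : (a == 0) = false by bl.
have -> : (b == 0) = false by bl.
by case: (a < b) => //=; rewrite andbF.
Qed.
Lemma rbs_00 v : rbs v 0 0 = true. Proof. by []. Qed.
Lemma rbs_0p v b : 0 < b -> rbs v 0 b = ~~ sv v b.
Proof. move=> hb; rewrite /rbs /= hb orbF; have -> : (b == 0) = false by bl. by []. Qed.
Lemma rbs_p0 v a : 0 < a -> rbs v a 0 = sv v a.
Proof.
move=> ha; rewrite /rbs ha /= !andbT andbF; have -> : (a == 0) = false by bl.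
by [].
Qed.

Lemma pp_eq n v (u : word) i : derangement v -> u \in Sh n v -> 0 < i < size u ->
  0 < ltr u i -> 0 < ltr u i.+1 -> (ltr u i <= ltr u i.+1) = rbs v (ltr u i) (ltr u i.+1).
Proof.
move=> hd hu hi p1 p2; rewrite rbs_pp //.
have := axne (idx_adj hu (der_uniq hd) hi p1 p2); lia.
Qed.

Lemma stepF n v (u : word) j z : derangement v -> u \in Sh n v -> 0 < j <= n -> ltr u j = 0 ->
  j < z <= n.+1 -> (forall t, j < t < z -> 0 < ltr u t) -> (z <= n -> ltr u z = 0) ->
  ~~ Sx v (xlt u j.-1) -> ~~ Sx v (xlt u j.+1) ->
  forall i, 0 < i < n -> mp v u z.-1 i = mp v u j.-1 i.
Proof.
move=> hd hu hj xj hz hpos hzz nl nr i hi.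
have [su _ _] := ShP hu.
rewrite !mpE; try lia.
case: (ltnP i j.-1) => h1; first by simp_if.
case: (leqP z.-1 i) => h2; first by simp_if.
simp_if.
case: (eqVneq i j.-1) => [ei|ne].
  have -> : i.+1 = j by lia.
  rewrite xj ei; case: (posnP (ltr u j.-1)) => [->//|p].
  rewrite rbs_p0 //; move: nl; rewrite SxE; last lia.
  rewrite p /= => /negbTE ->; bl.
case: (eqVneq i j) => [ei|ne2].
  rewrite ei xj.
  have p : 0 < ltr u j.+1 by apply: hpos; lia.
  rewrite rbs_0p //; move: nr; rewrite SxE; last lia.
  by rewrite p /= => ->.
by apply: (pp_eq hd hu); try lia; apply: hpos; lia.
Qed.

Lemma stepR n v (u : word) j z K : derangement v -> u \in Sh n v -> 0 < j -> ltr u j = 0 ->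
  j < z <= n.+1 -> (forall t, j < t < z -> 0 < ltr u t) -> (z <= n -> ltr u z = 0) ->
  Rdata v u j K -> forall i, 0 < i < n -> mp v u z.-1 i = mp v (moveR u j K) K.-1 i.
Proof.
move=> hd hu j0 xj hz hpos hzz [hK pos inc mx cnd] i hi.
have [su _ _] := ShP hu; have uv := der_uniq hd.
have Kz : K < z.
  case: (ltnP K z) => // h.
  have hz1 : j < z <= K by lia.
  by have [p _] := pos z hz1; rewrite hzz in p; lia.
have sR : size (moveR u j K) = n by rewrite size_moveR; lia.
rewrite mpE; last lia. rewrite mpE; last lia.
rewrite !ltr_moveR; try lia.
case: (ltnP i.+1 j) => h1; first by simp_if.
case: (eqVneq i.+1 j) => [e1|n1].
  simp_if; rewrite e1 xj.
  have -> : i = j.-1 by lia.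
  case: (posnP (ltr u j.-1)) => [->//|pa].
  have hjj : j < j.+1 <= K by lia.
  have [pb sb] := pos j.+1 hjj.
  have hj2 : 1 < j < size u by lia.
  have idx := idx_gap hu uv hj2 xj pa pb.
  move: cnd; rewrite SxE; last lia.
  rewrite pa /=; case/orP => [nsa|lt].
    have : ~~ (ltr u j.-1 < ltr u j.+1) by apply/negP => lt; move: (ax1 idx lt nsa); rewrite sb.
    have := axne idx; lia.
  lia.
case: (ltnP i K.-1) => h3.
  simp_if.
  have hh : j < i.+1 < K by lia.
  have -> : ltr u i.+1 <= ltr u i.+2 by apply: ltnW; apply: inc.
  case: (eqVneq i j) => [->|nij]; first by rewrite xj.
  by apply: ltnW; apply: inc; lia.
case: (eqVneq i K.-1) => [e3|n3].
  simp_if.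
  have eK : i.+1 = K by lia.
  rewrite eK.
  have hKK : j < K <= K by lia.
  have [pK sK] := pos K hKK.
  rewrite rbs_p0 // sK.
  case: (eqVneq i j) => [->|nij]; first by rewrite xj.
  have hh : j < i < K by lia.
  by rewrite -eK; apply: ltnW; apply: inc.
case: (eqVneq i K) => [e4|n4].
  rewrite e4.
  have hKK : j < K <= K by lia.
  have [pK sK] := pos K hKK.
  case: (ltnP K z.-1) => h5.
    simp_if.
    have hh : j < K.+1 < z by lia.
    have p1 := hpos K.+1 hh.
    rewrite rbs_0p //.
    have hK0 : 0 < K < size u by lia.
    have idx := idx_adj hu uv hK0 pK p1.
    apply/idP/idP.
      move=> le; apply: mx; first lia.
      by have := axne idx; lia.
    move=> nsv; case: (ltnP (ltr u K.+1) (ltr u K)) => // lt.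
    by move: (ax2 idx lt sK); rewrite (negbTE nsv).
  simp_if.
  have xz : ltr u K.+1 = 0 by rewrite (_ : K.+1 = z); [apply: hzz; lia | lia].
  by rewrite xz rbs_p0 // sK rbs_00.
simp_if.
case: (ltnP i z.-1) => h6; simp_if => //.
by apply: (pp_eq hd hu); try lia; apply: hpos; lia.
Qed.

Lemma stepL n v (u : word) j z I : derangement v -> u \in Sh n v -> 0 < j <= n -> ltr u j = 0 ->
  j < z <= n.+1 -> (forall t, j < t < z -> 0 < ltr u t) -> (z <= n -> ltr u z = 0) ->
  Ldata v u j I -> forall i, 0 < i < n -> mp v u z.-1 i = mp v (moveL u j I) I.-1 i.
Proof.
move=> hd hu hj xj hz hpos hzz [hI pos dec mn cnd] i hi.
have [su _ _] := ShP hu; have uv := der_uniq hd.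
have sL : size (moveL u j I) = n by rewrite size_moveL; lia.
rewrite mpE; last lia. rewrite mpE; last lia.
rewrite !ltr_moveL; try lia.
case: (ltnP i.+1 I) => h1; first by simp_if.
case: (eqVneq i.+1 I) => [e1|n1].
  simp_if; rewrite e1.
  have -> : i = I.-1 by lia.
  have hII : I <= I <= j.-1 by lia.
  have [pI sI] := pos I hII.
  case: (posnP (ltr u I.-1)) => [->|pa]; first by rewrite rbs_00.
  rewrite rbs_p0 //.
  have hI0 : 0 < I.-1 < size u by lia.
  have idx := idx_adj hu uv hI0 pa; rewrite prednK in idx; last lia.
  move/(_ pI): idx => idx.
  apply/idP/idP.
    move=> le; apply/negPn/negP => nsa.
    have lt : ltr u I.-1 < ltr u I by have := axne idx; lia.
    by move: (ax1 idx lt nsa); rewrite sI.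
  by move=> sa; apply: ltnW; apply: mn => //; lia.
case: (eqVneq i I) => [e2|n2].
  simp_if; rewrite e2.
  have hII : I <= I <= j.-1 by lia.
  have [pI sI] := pos I hII.
  rewrite rbs_0p // sI.
  case: (eqVneq I j.-1) => [eIj|nIj].
    have -> : I.+1 = j by lia.
    by rewrite xj; bl.
  have hh : I <= I < j.-1 by lia.
  by have := dec I hh; bl.
case: (ltnP i j) => h4.
  simp_if.
  have hh : I <= i.-1 <= j.-1 by lia.
  have [pa _] := pos i.-1 hh.
  have hh2 : I <= i <= j.-1 by lia.
  have [pb _] := pos i hh2.
  rewrite rbs_pp //.
  have hh3 : I <= i.-1 < j.-1 by lia.
  have := dec i.-1 hh3; rewrite prednK; last lia.
  move=> lt; have -> : (ltr u i.-1 < ltr u i) = false by bl.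
  case: (eqVneq i.+1 j) => [e|ne]; first by rewrite e xj; bl.
  have hh4 : I <= i < j.-1 by lia.
  by have := dec i hh4; bl.
case: (eqVneq i j) => [e5|n5].
  rewrite e5.
  have hjj : I <= j.-1 <= j.-1 by lia.
  have [pa sa] := pos j.-1 hjj.
  case: (ltnP j z.-1) => h5.
    simp_if.
    have hh : j < j.+1 < z by lia.
    have pb := hpos j.+1 hh.
    rewrite xj rbs_pp //.
    have hj2 : 1 < j < size u by lia.
    have idx := idx_gap hu uv hj2 xj pa pb.
    move: cnd; rewrite SxE; last lia.
    rewrite pb /=; case/orP => [nsb|lt]; last by rewrite lt.
    case: (ltnP (ltr u j.+1) (ltr u j.-1)) => lt.
      by move: (ax2 idx lt sa); rewrite (negbTE nsb).
    by have := axne idx; lia.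
  simp_if.
  have xz : ltr u j.+1 = 0 by rewrite (_ : j.+1 = z); [apply: hzz; lia | lia].
  by rewrite xz xj rbs_00 rbs_p0 // sa.
simp_if.
case: (ltnP i z.-1) => h6; simp_if => //.
by apply: (pp_eq hd hu); try lia; apply: hpos; lia.
Qed.


Lemma rb_last v (u : word) : 0 < size u -> rb v (xlt u (size u)) (xlt u (size u).+1) = true.
Proof.
move=> h; rewrite xltE; last lia. rewrite xltN; last by rewrite ltnSn orbT.
by rewrite /rb /=; case: (ltr u (size u)).
Qed.

Lemma rbE v (u : word) i : 0 < i < size u ->
  rb v (xlt u i) (xlt u i.+1) = rbs v (ltr u i) (ltr u i.+1).
Proof. by move=> hi; rewrite !xltE //; lia. Qed.

Lemma RISEbE n v (u : word) : derangement v -> u \in Sh n v ->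
  RISEb u = [seq i <- iota 1 (size u) | rb v (xlt u i) (xlt u i.+1)].
Proof.
move=> hd hu; apply: eq_in_filter => i; rewrite mem_iota => hi.
rewrite (excE _ hd hu) (subexcE _ hd hu) /rb (xltE (_ : 0 < i <= size u)); last lia.
by [].
Qed.

Lemma phi_step n v (u : word) l z : derangement v -> u \in Sh n v -> 0 < l <= n - size v ->
  zpos u l < z <= n.+1 -> (forall t, zpos u l < t < z -> 0 < ltr u t) -> (z <= n -> ltr u z = 0) ->
  MR v u z.-1 = MR v (phi n (size v) l u) (zpos (phi n (size v) l u) l).-1.
Proof.
move=> hd hu hl hz hpos hzz.
have [su _ _] := ShP hu.
have hs' := phi_size l hd hu.
have [hj xj Zj c] := phi_cases hd hu hl.
rewrite /MR hs' su; apply: eq_in_filter => i; rewrite mem_iota => hi.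
case: (ltnP i n) => hin; last first.
  have -> : i = n by lia.
  rewrite -[X in mp v u _ X]su mp_last; last lia.
  by rewrite -[X in mp v _ _ X]hs' mp_last //; lia.
have hi' : 0 < i < n by lia.
case: c => [[-> nl nr]|[K eu R]|[I eu L]].
- exact: stepF hd hu hj xj hz hpos hzz nl nr i hi'.
- rewrite eu (tgtR _ _ Zj R); try lia.
  apply: (stepR hd hu _ xj hz hpos hzz R hi'); lia.
- rewrite eu (tgtL _ _ Zj L); try lia.
  exact: (stepL hd hu hj xj hz hpos hzz L hi').
Qed.


Lemma foldr_out n (v : word) (w : word) a b : n - size v < a -> foldr (phi n (size v)) w (iota a b) = w.
Proof.
elim: b a => //= b IH a ha; rewrite IH; last lia.
by rewrite phi_out //; lia.
Qed.

Lemma PhiE n (v : word) (w : word) : size v <= n ->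
  Phi n (size v) w = foldr (phi n (size v)) w (iota 1 (n - size v)).
Proof.
move=> hvn; rewrite /Phi.
have -> : iota 1 n = iota 1 (n - size v) ++ iota (1 + (n - size v)) (size v).
  by rewrite -iotaD; congr iota; lia.
by rewrite foldr_cat (@foldr_out n v w (1 + (n - size v))) //; lia.
Qed.

Lemma foldr_Sh n (v : word) s (w : word) : derangement v -> w \in Sh n v ->
  foldr (phi n (size v)) w s \in Sh n v.
Proof. by move=> hd hw; elim: s => //= l s IH; apply: phi_Sh. Qed.

Lemma foldr_inj n (v : word) s (w1 w2 : word) : derangement v -> w1 \in Sh n v -> w2 \in Sh n v ->
  foldr (phi n (size v)) w1 s = foldr (phi n (size v)) w2 s -> w1 = w2.
Proof.
move=> hd h1 h2; elim: s => //= l s IH h; apply: IH.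
exact: (phi_inj hd (foldr_Sh s hd h1) (foldr_Sh s hd h2) h).
Qed.

Lemma Z0_pos (u : word) k t : Z u k = 0 -> 0 < t <= k -> 0 < ltr u t.
Proof.
move=> hZ ht.
have : ~~ has (fun t => ltr u t == 0) (iota 1 k) by rewrite has_count -/(Z u k) hZ.
move=> /hasPn /(_ t); rewrite mem_iota; have -> : 1 <= t < 1 + k by lia.
by move/(_ isT); rewrite lt0n.
Qed.

Lemma rise_inv n v (w : word) b : derangement v -> size v <= n -> w \in Sh n v -> b <= n - size v ->
  let a := (n - size v).+1 - b in let u := foldr (phi n (size v)) w (iota a b) in
  MR v u (if a <= n - size v then zpos u a else n.+1).-1 = RISE w.
Proof.
move=> hd hvn hw; have [sw _ _] := ShP hw.
elim: b => [|b IH] hb a u.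
  rewrite /a /u subn0 /= ifF; last lia.
  rewrite /MR /RISE; apply: eq_in_filter => i; rewrite mem_iota => hi.
  case: (ltnP i n) => hin; first by rewrite /mp ifT.
  have -> : i = n by lia.
  rewrite -[X in mp v w _ X]sw mp_last; last lia.
  rewrite /ole (@xltN w n.+1); last by rewrite sw ltnSn orbT.
  by case: (xlt w n).
have IH' := IH (ltnW hb); cbv zeta in IH'.
move: IH'; set a' := (n - size v).+1 - b; set u0 := foldr _ w (iota a' b) => IH'.
have ea : a.+1 = a' by rewrite /a /a'; lia.
have eu : u = phi n (size v) a u0 by rewrite /u /= ea.
have hu0 : u0 \in Sh n v by apply: foldr_Sh.
have [su0 _ _] := ShP hu0.
have hl : 0 < a <= n - size v by rewrite /a; lia.
rewrite ifT; last lia.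
rewrite -IH' eu; symmetry.
have [hj xj Zj] := zposP hu0 hl.
set j := zpos u0 a in hj xj Zj *.
apply: phi_step => //.
- case: ifP => ha'.
    have hl' : 0 < a' <= n - size v by lia.
    have [hz xz Zz] := zposP hu0 hl'.
    rewrite -/j; case: (ltnP j (zpos u0 a')) => h; first lia.
    have hle : (zpos u0 a').-1 <= j.-1 by lia.
    by have := Z_mono u0 hle; rewrite Zj Zz; lia.
  by rewrite -/j; lia.
- move=> t ht.
  have e2 : ltr u0 j.-1.+1 = 0 by rewrite prednK //; lia.
  case: ifP => ha' in ht.
    have hl' : 0 < a' <= n - size v by lia.
    have [hz xz Zz] := zposP hu0 hl'.
    have e1 : Z u0 (zpos u0 a').-1 = Z u0 j.-1 + 1 by rewrite Zj Zz; lia.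
    apply: (Z_between e1 e2); lia.
  have e1 : Z u0 n = Z u0 j.-1 + 1 by rewrite -{1}su0 (ShZ hu0) Zj; lia.
  apply: (Z_between e1 e2); lia.
- case: ifP => ha' hz; last lia.
  have hl' : 0 < a' <= n - size v by lia.
  by have [_ -> _] := zposP hu0 hl'.
Qed.


Fixpoint allw (M k : nat) : seq word :=
  if k is k'.+1 then [seq x :: s | x <- iota 0 M.+1, s <- allw M k'] else [:: [::]].

Lemma mem_allw M (s : word) : all (fun x => x <= M) s -> s \in allw M (size s).
Proof.
elim: s => [|x s IH]; first by rewrite inE.
move=> /= /andP[hx hs].
change (x :: s \in [seq y :: t | y <- iota 0 M.+1, t <- allw M (size s)]).
apply/allpairsP; exists (x, s); split => //=; last exact: IH.
by rewrite -[0 :: _]/(iota 0 M.+1) mem_iota; lia.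
Qed.

Lemma Sh_bound n v (w : word) : derangement v -> w \in Sh n v -> all (fun x => x <= size v) w.
Proof.
move=> /andP[hp _] hw; have [_ _ hP] := ShP hw.
apply/allP => x xw; case: (posnP x) => [->//|px].
have : x \in v by rewrite -hP mem_filter px.
by rewrite (perm_mem hp) mem_iota; lia.
Qed.

Theorem theorem1p1 (v : seq nat) (n : nat) :
  derangement v -> size v <= n ->
  [/\ {in Sh n v, forall w, Phi n (size v) w \in Sh n v},
      {in Sh n v &, injective (Phi n (size v))},
      {in Sh n v, forall w', exists2 w, w \in Sh n v & Phi n (size v) w = w'}
    & {in Sh n v, forall w, RISE w = RISEb (Phi n (size v) w)}].
Proof.
move=> hd hvn.
have shP : {in Sh n v, forall w, Phi n (size v) w \in Sh n v}.
  by move=> w hw; rewrite PhiE //; apply: foldr_Sh.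
have injP : {in Sh n v &, injective (Phi n (size v))}.
  by move=> w1 w2 h1 h2; rewrite !PhiE //; apply: foldr_inj.
split => //.
- move=> w' hw'.
  set E := undup [seq s <- allw (size v) n | s \in Sh n v].
  have memE : forall s, (s \in E) = (s \in Sh n v).
    move=> s; rewrite mem_undup mem_filter; apply/andP/idP => [[]//|h]; split => //.
    have [<- _ _] := ShP h; apply: mem_allw; exact: Sh_bound hd h.
  have uM : uniq (map (Phi n (size v)) E).
    rewrite map_inj_in_uniq ?undup_uniq // => x y hx hy; apply: injP; by rewrite -memE.
  have sub : {subset map (Phi n (size v)) E <= E}.
    by move=> y /mapP[x hx ->]; rewrite memE; apply: shP; rewrite -memE.
  have hsz : size E <= size (map (Phi n (size v)) E) by rewrite size_map.
  have [_ eqE] := uniq_min_size uM sub hsz.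
  have : w' \in map (Phi n (size v)) E by rewrite eqE memE.
  by case/mapP => x hx ->; exists x => //; rewrite -memE.
- move=> w hw.
  have := rise_inv hd hvn hw (leqnn (n - size v)); cbv zeta.
  rewrite (_ : (n - size v).+1 - (n - size v) = 1); last lia.
  rewrite -PhiE //.
  set u := Phi n (size v) w => <-.
  have hu : u \in Sh n v by apply: shP.
  have [su _ _] := ShP hu.
  rewrite (RISEbE hd hu) /MR; apply: eq_in_filter => i; rewrite mem_iota => hi.
  case: (ltnP i n) => hin; last first.
    have -> : i = n by lia.
    rewrite -[X in mp v u _ X]su mp_last; last lia.
    by rewrite -su rb_last //; lia.
  have hi' : 0 < i < size u by lia.
  rewrite mpE // rbE //.
  case: ifP => // hit.
  have Z0 : Z u (if 1 <= n - size v then zpos u 1 else n.+1).-1 = 0.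
    case: ifP => hd1.
      have hl : 0 < 1 <= n - size v by lia.
      by have [_ _ ->] := zposP hu hl.
    by rewrite -su (ShZ hu); lia.
  apply: (pp_eq hd hu) => //; apply: (Z0_pos Z0); lia.
Qed.
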